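(* The price of anarchy (supremum over all weights $w_1,w_2\ge0$ with $w_1+w_2>0$ and all instances, with respect to pure Nash equilibria) for symmetric simultaneous two-player weighted network routing games with affine costs and uniform cost functions is equal to $2$.
   Context: A weighted two-player network routing game with affine costs consists of a directed graph whose arcs $r$ are resources with coefficients $\alpha_r,\beta_r\ge0$, two players $i=1,2$ with weights $w_i\ge0$, each with a source $s_i$ and a sink $t_i$; the actions $\mathcal{A}_i$ of player $i$ are the arc sets of directed $s_i$–$t_i$ paths. It is symmetric if both players have the same source and the same sink. For an action profile $A=(A_1,A_2)$ the load of arc $r$ is $x_r(A)=\sum_{j:\, r\in A_j} w_j$. With uniform costs, player $i$ pays $C_i(A)=\sum_{r\in A_i}(\alpha_r+\beta_r x_r(A))$. The social cost is $C(A)=C_1(A)+C_2(A)$. A pure Nash equilibrium is a profile from which no player can lower her cost by unilaterally changing her action. The price of anarchy of an instance is the maximum over Nash equilibria $A$ of $C(A)/\min_{A'} C(A')$; the price of anarchy of a class is the supremum over all instances (with positive optimal social cost). *)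

(* Defs.v *)
From HB Require Import structures.
From mathcomp Require Import all_boot all_order all_algebra.
From mathcomp Require Import reals.
Set Implicit Arguments. Unset Strict Implicit. Unset Printing Implicit Defensive.
Import Order.TTheory GRing.Theory Num.Theory.
Local Open Scope ring_scope.

Section Routing.
Variables (R : realType) (V E : finType) (tl hd : E -> V).

Fixpoint is_walk (s t : V) (p : seq E) : bool :=
  match p with
  | [::] => s == t
  | e :: p' => (tl e == s) && is_walk (hd e) t p'
  end.

Definition is_action (s t : V) (A : {set E}) : Prop :=
  exists p : seq E,
    [&& is_walk s t p & uniq (s :: map hd p)] /\ A = [set e in p].

Variables (alpha beta : E -> R) (w1 w2 : R).

Definition load (A1 A2 : {set E}) (r : E) : R :=
  (if r \in A1 then w1 else 0) + (if r \in A2 then w2 else 0).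

(* uniform affine cost paid by a player using A under profile (A1, A2) *)
Definition pcost (A A1 A2 : {set E}) : R :=
  \sum_(r in A) (alpha r + beta r * load A1 A2 r).

Definition cost1 (A1 A2 : {set E}) : R := pcost A1 A1 A2.
Definition cost2 (A1 A2 : {set E}) : R := pcost A2 A1 A2.
Definition social_cost (A1 A2 : {set E}) : R := cost1 A1 A2 + cost2 A1 A2.

(* symmetric game: both players have source s and sink t *)
Definition feasible (s t : V) (A1 A2 : {set E}) : Prop :=
  is_action s t A1 /\ is_action s t A2.

Definition is_pure_NE (s t : V) (A1 A2 : {set E}) : Prop :=
  feasible s t A1 A2 /\
  (forall B1, is_action s t B1 -> cost1 A1 A2 <= cost1 B1 A2) /\
  (forall B2, is_action s t B2 -> cost2 A1 A2 <= cost2 A1 B2).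

(* the instance is admissible: nonnegative data, w1 + w2 > 0, and
   positive optimal social cost (every feasible profile has positive cost;
   there are finitely many profiles, so this is min > 0) *)
Definition admissible (s t : V) : Prop :=
  (forall r, 0 <= alpha r) /\ (forall r, 0 <= beta r) /\
  0 <= w1 /\ 0 <= w2 /\ 0 < w1 + w2 /\
  (forall A1 A2, feasible s t A1 A2 -> 0 < social_cost A1 A2).

End Routing.

(* Main.v *)
Require Import Defs.
From HB Require Import structures.
From mathcomp Require Import all_boot all_order all_algebra.
From mathcomp Require Import reals.
From mathcomp Require Import lra.
Import Order.TTheory GRing.Theory Num.Theory.
Local Open Scope ring_scope.
Lemma key1 (R : realType) (E : finType) (alpha beta : E -> R) (w1 w2 : R)
  (ha : forall r, 0 <= alpha r) (hb : forall r, 0 <= beta r)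
  (h2 : 0 <= w2) (h12 : w2 <= w1) (A1 A2 B1 B2 : {set E}) :
  (w1 - w2) * cost1 alpha beta w1 w2 B1 A2 + 2 * w2 * cost1 alpha beta w1 w2 B2 A2
  + (w1 + w2) * cost2 alpha beta w1 w2 A1 B1
  <= 2 * (w1 + w2) * social_cost alpha beta w1 w2 B1 B2.
Proof.
rewrite /social_cost /cost1 /cost2 /pcost mulrDr !mulr_sumr. rewrite [X in X + _ + _ <= _]big_mkcond [X in _ + X + _ <= _]big_mkcond [X in _ + X <= _]big_mkcond [X in _ <= X + _]big_mkcond [X in _ <= _ + X]big_mkcond -!big_split /=.
apply: ler_sum => r _; rewrite /load.
have a0 := ha r; have b0 := hb r.
have h1 : 0 <= w1 by lra.
have c1 := mulr_ge0 b0 (mulr_ge0 h1 h1).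
have c2 := mulr_ge0 b0 (mulr_ge0 h1 h2).
have c3 := mulr_ge0 b0 (mulr_ge0 h2 h2).
have c4 := mulr_ge0 a0 h1.
have c5 := mulr_ge0 a0 h2.
have c6 : 0 <= beta r * ((w1 - w2) * w2) by apply: mulr_ge0 => //; apply: mulr_ge0; lra.
have c7 : 0 <= alpha r * (w1 - w2) by apply: mulr_ge0 => //; lra.
have c8 : 0 <= beta r * ((w1 - w2) * w1) by apply: mulr_ge0 => //; apply: mulr_ge0; lra.
case: (r \in A1); case: (r \in A2); case: (r \in B1); case: (r \in B2) => /=; nra.
Qed.
Lemma key2 (R : realType) (E : finType) (alpha beta : E -> R) (w1 w2 : R)
  (ha : forall r, 0 <= alpha r) (hb : forall r, 0 <= beta r)
  (h1 : 0 <= w1) (h12 : w1 <= w2) (A1 A2 B1 B2 : {set E}) :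
  (w2 - w1) * cost2 alpha beta w1 w2 A1 B2 + 2 * w1 * cost2 alpha beta w1 w2 A1 B1
  + (w1 + w2) * cost1 alpha beta w1 w2 B2 A2
  <= 2 * (w1 + w2) * social_cost alpha beta w1 w2 B1 B2.
Proof.
rewrite /social_cost /cost1 /cost2 /pcost mulrDr !mulr_sumr. rewrite [X in X + _ + _ <= _]big_mkcond [X in _ + X + _ <= _]big_mkcond [X in _ + X <= _]big_mkcond [X in _ <= X + _]big_mkcond [X in _ <= _ + X]big_mkcond -!big_split /=.
apply: ler_sum => r _; rewrite /load.
have a0 := ha r; have b0 := hb r.
have h2 : 0 <= w2 by lra.
have c1 := mulr_ge0 b0 (mulr_ge0 h1 h1).
have c2 := mulr_ge0 b0 (mulr_ge0 h1 h2).
have c3 := mulr_ge0 b0 (mulr_ge0 h2 h2).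
have c4 := mulr_ge0 a0 h1.
have c5 := mulr_ge0 a0 h2.
have c6 : 0 <= beta r * ((w2 - w1) * w1) by apply: mulr_ge0 => //; apply: mulr_ge0; lra.
have c7 : 0 <= alpha r * (w2 - w1) by apply: mulr_ge0 => //; lra.
have c8 : 0 <= beta r * ((w2 - w1) * w2) by apply: mulr_ge0 => //; apply: mulr_ge0; lra.
case: (r \in A1); case: (r \in A2); case: (r \in B1); case: (r \in B2) => /=; nra.
Qed.

Lemma upper (R : realType) (V E : finType) (tl hd : E -> V) (alpha beta : E -> R) (w1 w2 : R)
          (s t : V) :
      admissible tl hd alpha beta w1 w2 s t ->
      forall A1 A2 B1 B2,
        is_pure_NE tl hd alpha beta w1 w2 s t A1 A2 ->
        feasible tl hd s t B1 B2 ->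
        social_cost alpha beta w1 w2 A1 A2
          <= 2 * social_cost alpha beta w1 w2 B1 B2.
Proof.
move=> [ha [hb [hw1 [hw2 [hw _]]]]] A1 A2 B1 B2 [_ [NE1 NE2]] [fB1 fB2].
have e1 := NE1 _ fB1; have e1' := NE1 _ fB2; have e2 := NE2 _ fB1; have e2' := NE2 _ fB2.
rewrite -(ler_pM2l hw).
case: (leP w2 w1) => h.
- have K := @key1 R E alpha beta w1 w2 ha hb hw2 h A1 A2 B1 B2.
  move: K e1 e1' e2 e2'.
  rewrite /social_cost.
  set a1 := cost1 _ _ _ _ A1 A2; set a2 := cost2 _ _ _ _ A1 A2.
  set x := cost1 _ _ _ _ B1 A2; set y := cost1 _ _ _ _ B2 A2.
  set z := cost2 _ _ _ _ A1 B1; set S := (_ + cost2 _ _ _ _ B1 B2).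
  move=> K f1 f2 f3 _.
  have g1 : 0 <= (w1 - w2) * (x - a1) by apply: mulr_ge0; lra.
  have g2 : 0 <= w2 * (y - a1) by apply: mulr_ge0; lra.
  have g3 : 0 <= (w1 + w2) * (z - a2) by apply: mulr_ge0; lra.
  nra.
- have h' : w1 <= w2 by apply: ltW.
  have K := @key2 R E alpha beta w1 w2 ha hb hw1 h' A1 A2 B1 B2.
  move: K e1 e1' e2 e2'.
  rewrite /social_cost.
  set a1 := cost1 _ _ _ _ A1 A2; set a2 := cost2 _ _ _ _ A1 A2.
  set x := cost2 _ _ _ _ A1 B2; set y := cost2 _ _ _ _ A1 B1.
  set z := cost1 _ _ _ _ B2 A2; set S := (_ + cost2 _ _ _ _ B1 B2).
  move=> K _ f1 f2 f3.
  have g1 : 0 <= (w2 - w1) * (x - a2) by apply: mulr_ge0; lra.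
  have g2 : 0 <= w1 * (y - a2) by apply: mulr_ge0; lra.
  have g3 : 0 <= (w1 + w2) * (z - a1) by apply: mulr_ge0; lra.
  nra.
Qed.

Set Implicit Arguments. Unset Strict Implicit.

Section Ex.
Variable R : realType.
Definition tlE (e : bool) : bool := false.
Definition hdE (e : bool) : bool := true.
Definition alE (e : bool) : R := if e then 0 else 1.
Definition beE (e : bool) : R := if e then 1 else 0.

Lemma act_nonempty (A : {set bool}) : is_action tlE hdE false true A -> exists r, r \in A.
Proof.
move=> [[|e p] [/andP [Hw _] ->]] //.
by exists e; rewrite inE in_cons eqxx.
Qed.

Lemma act1 (b : bool) : is_action tlE hdE false true [set b].
Proof.
exists [:: b]; split; first by [].
by apply/setP => x; rewrite !inE.
Qed.

Lemma sum_ge1 (A : {set bool}) (f : bool -> R) (r : bool) :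
  r \in A -> (forall i, i \in A -> 1 <= f i) -> 1 <= \sum_(i in A) f i.
Proof.
move=> rA H; rewrite (bigD1 r) //=.
have : 0 <= \sum_(i in A | i != r) f i.
  apply: sumr_ge0 => i /andP [iA _]; have := H i iA; lra.
have := H r rA; lra.
Qed.

Lemma cost1_ge1 (A1 A2 : {set bool}) : is_action tlE hdE false true A1 ->
  1 <= cost1 alE beE 1 0 A1 A2.
Proof.
move=> /act_nonempty [r rA]; apply: (sum_ge1 rA) => i iA.
rewrite /load iA; case: i iA => /= _; case: (_ \in A2); lra.
Qed.

Lemma cost2_ge1 (A2 : {set bool}) : is_action tlE hdE false true A2 ->
  1 <= cost2 alE beE 1 0 [set true] A2.
Proof.
move=> /act_nonempty [r rA]; apply: (sum_ge1 rA) => i iA.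
rewrite /load iA !inE; case: i iA => /= _; lra.
Qed.

Lemma cost2_ge0 (A1 A2 : {set bool}) : 0 <= cost2 alE beE 1 0 A1 A2.
Proof.
apply: sumr_ge0 => i _; rewrite /load; case: i; case: (_ \in A1); case: (_ \in A2) => /=; lra.
Qed.

Lemma lower (eps : R) : 0 < eps ->
     exists (V E : finType) (tl hd : E -> V) (alpha beta : E -> R) (w1 w2 : R)
            (s t : V),
       admissible tl hd alpha beta w1 w2 s t /\
       exists A1 A2 B1 B2,
         is_pure_NE tl hd alpha beta w1 w2 s t A1 A2 /\
         feasible tl hd s t B1 B2 /\
         (2 - eps) * social_cost alpha beta w1 w2 B1 B2
           < social_cost alpha beta w1 w2 A1 A2.
Proof.
move=> he.
exists bool, bool, tlE, hdE, alE, beE, 1, 0, false, true.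
split.
  do 5 (split; first by (try case); rewrite /alE /beE //= ?ler01 ?lexx; lra).
  move=> A1 A2 [f1 f2]; rewrite /social_cost.
  have := cost1_ge1 A2 f1; have := cost2_ge0 A1 A2; lra.
exists [set true], [set true], [set false], [set true].
split; last split.
- split; first by split; apply: act1.
  split.
  + move=> B1 fB; have := cost1_ge1 [set true] fB.
    by rewrite /cost1 /pcost big_set1 /load !inE /= /alE /beE; lra.
  + move=> B2 fB; have := cost2_ge1 fB.
    by rewrite /cost2 /pcost big_set1 /load !inE /= /alE /beE; lra.
- by split; apply: act1.
- rewrite /social_cost /cost1 /cost2 /pcost !big_set1 /load !inE /= /alE /beE; lra.
Qed.
End Ex.

Theorem theorem4 (R : realType) :
  (* upper bound: every pure NE costs at most twice any feasible profile *)
  (forall (V E : finType) (tl hd : E -> V) (alpha beta : E -> R) (w1 w2 : R)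
          (s t : V),
      admissible tl hd alpha beta w1 w2 s t ->
      forall A1 A2 B1 B2,
        is_pure_NE tl hd alpha beta w1 w2 s t A1 A2 ->
        feasible tl hd s t B1 B2 ->
        social_cost alpha beta w1 w2 A1 A2
          <= 2 * social_cost alpha beta w1 w2 B1 B2) /\
  (* tightness: the supremum is 2 *)
  (forall eps : R, 0 < eps ->
     exists (V E : finType) (tl hd : E -> V) (alpha beta : E -> R) (w1 w2 : R)
            (s t : V),
       admissible tl hd alpha beta w1 w2 s t /\
       exists A1 A2 B1 B2,
         is_pure_NE tl hd alpha beta w1 w2 s t A1 A2 /\
         feasible tl hd s t B1 B2 /\
         (2 - eps) * social_cost alpha beta w1 w2 B1 B2
           < social_cost alpha beta w1 w2 A1 A2).
Proof.
split; [exact: upper | exact: lower].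
Qed.
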